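(* Let $A$ be a connectivity class of external positions of the $n$-dimensional puzzle with edge $k$ which is not its frame class, and let $p_1,p_2,p_3$ be three distinct positions in $A$. Then there exist a combination $g$ and a 3-dimensional layer $L=\{p\in M^n: p_l=c_l\ \text{for } l\notin I\}$ (with $I\subseteq\{1,\dots,n\}$, $|I|=3$, $c_l\in M$) such that $g(p_r)\in L$ for $r=1,2,3$, and the restrictions $g(p_1)|_I,g(p_2)|_I,g(p_3)|_I\in M^3$ all lie in one and the same connectivity class of the 3-dimensional puzzle with edge $k$, this class not being the frame class of the 3-dimensional puzzle.
   Context: Fix integers $k\ge2$, $n\ge3$, $M=\{0,\dots,k-1\}$. For any dimension $d\ge3$ the $d$-dimensional puzzle with edge $k$ has positions $p\in M^d$; $B(p)=\{i:p_i\in\{0,k-1\}\}$, $p$ external if $B(p)\ne\emptyset$. For distinct $i,j$, $\psi_{i,j}:M^d\to M^d$ is $(\psi_{i,j}p)_i=k-1-p_j$, $(\psi_{i,j}p)_j=p_i$, other coordinates unchanged. A move is given by distinct $i,j$ and constants $c_l\in M$ ($l\notin\{i,j\}$) and applies $\psi_{i,j}$ to all positions $p$ with $p_l=c_l$ ($l\notin\{i,j\}$), fixing the others; a combination is a finite sequence of moves (composite permutation of $M^d$). Connectivity classes are orbits of external positions under combinations. For odd $k$ the frame class is the set of positions with exactly one coordinate in $\{0,k-1\}$ and all others equal to $(k-1)/2$; for even $k$ there is none. For $I=\{i_1<i_2<i_3\}$, $p|_I=(p_{i_1},p_{i_2},p_{i_3})\in M^3$. *)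

(* Defs.v *)
From mathcomp Require Import all_boot.
Set Implicit Arguments. Unset Strict Implicit. Unset Printing Implicit Defensive.

(* Positions of the d-dimensional puzzle with edge k: elements of M^d,
   M = {0,..,k-1} represented by 'I_k, coordinates indexed by 'I_d. *)
Definition pos (d k : nat) := {ffun 'I_d -> 'I_k}.

Definition external d k (p : pos d k) : bool :=
  [exists i, (val (p i) == 0) || (val (p i) == k.-1)].

Definition psi d k (i j : 'I_d) (p : pos d k) : pos d k :=
  [ffun l => if l == i then rev_ord (p j) else if l == j then p i else p l].

(* A move: distinct i j and constants c_l for l outside {i,j}
   (the values c i, c j are irrelevant). *)
Definition move d k := ('I_d * 'I_d * {ffun 'I_d -> 'I_k})%type.

Definition move_ok d k (m : move d k) : bool := m.1.1 != m.1.2.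

Definition apply_move d k (m : move d k) (p : pos d k) : pos d k :=
  let: (i, j, c) := m in
  if [forall l, ((l != i) && (l != j)) ==> (p l == c l)] then psi i j p else p.

Definition is_comb d k (s : seq (move d k)) : bool := all (@move_ok d k) s.

Definition apply_comb d k (s : seq (move d k)) (p : pos d k) : pos d k :=
  foldr (@apply_move d k) p s.

Definition conn_class d k (q0 : pos d k) : pos d k -> Prop :=
  fun q => exists s, is_comb s /\ apply_comb s q0 = q.

Definition is_conn_class d k (A : pos d k -> Prop) : Prop :=
  exists q0 : pos d k, external q0 /\ forall q, A q <-> conn_class q0 q.

Definition in_bound k (x : 'I_k) : bool := (val x == 0) || (val x == k.-1).

Definition frame_pos d k (p : pos d k) : bool :=
  (#|[set i | in_bound (p i)]| == 1) &&
  [forall i, in_bound (p i) || (val (p i) == (k.-1)./2)].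

(* A is the frame class: k is odd and A is exactly the set of frame positions;
   for even k there is no frame class. *)
Definition is_frame_class d k (A : pos d k -> Prop) : Prop :=
  odd k /\ forall q, A q <-> frame_pos q.

Definition in_layer n k (i1 i2 i3 : 'I_n) (c : {ffun 'I_n -> 'I_k}) (p : pos n k) : bool :=
  [forall l, ((l != i1) && (l != i2) && (l != i3)) ==> (p l == c l)].

Definition restr3 n k (i1 i2 i3 : 'I_n) (p : pos n k) : pos 3 k :=
  [ffun t : 'I_3 => p (tnth [tuple i1; i2; i3] t)].

(* Main.v *)
Require Import Defs.
From mathcomp Require Import all_boot fingroup perm.
From mathcomp Require Import zify.
From Stdlib Require Import FunctionalExtensionality.
Set Implicit Arguments. Unset Strict Implicit. Unset Printing Implicit Defensive.


Section SP.
Variables (n k : nat).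
Local Notation P := (pos n k).

Definition fl (b : bool) (v : 'I_k) : 'I_k := if b then rev_ord v else v.
Lemma flK b v : fl b (fl b v) = v.
Proof. by case: b => //=; rewrite rev_ordK. Qed.
Lemma fl_add b b' v : fl b (fl b' v) = fl (b (+) b') v.
Proof. by case: b; case: b' => //=; rewrite rev_ordK. Qed.

Record sp := SP { spp : {perm 'I_n}; sps : 'I_n -> bool }.
Definition act (s : sp) (x : P) : P :=
  [ffun i => fl (sps s ((spp s)^-1%g i)) (x ((spp s)^-1%g i))].
Lemma actE s x a : act s x (spp s a) = fl (sps s a) (x a).
Proof. by rewrite ffunE permK. Qed.

Definition par (s : sp) := odd_perm (spp s) (+) \big[addb/false]_i sps s i.
Definition spcomp (s2 s1 : sp) :=
  SP (spp s1 * spp s2)%g (fun j => sps s1 j (+) sps s2 (spp s1 j)).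
Lemma act_comp s2 s1 x : act (spcomp s2 s1) x = act s2 (act s1 x).
Proof.
apply/ffunP => i.
have [j ->] : exists j, i = (spp s1 * spp s2)%g j.
  by exists ((spp s1 * spp s2)^-1%g i); rewrite permKV.
have -> : act (spcomp s2 s1) x ((spp s1 * spp s2)%g j) = act (spcomp s2 s1) x (spp (spcomp s2 s1) j) by [].
rewrite actE permM actE actE /= fl_add; congr fl; by rewrite addbC.
Qed.
Lemma big_perm (s : {perm 'I_n}) (F : 'I_n -> bool) :
  \big[addb/false]_i F (s i) = \big[addb/false]_i F i.
Proof. by symmetry; apply: (reindex_inj (h := s) (P := predT)); exact: perm_inj. Qed.
Lemma par_comp s2 s1 : par (spcomp s2 s1) = par s2 (+) par s1.
Proof.
rewrite /par /= odd_permM big_split /= (big_perm (spp s1) (sps s2)).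
move: (odd_perm _) (odd_perm _) (\big[_/_]_(_ < n) _) (\big[_/_]_(_ < n) _) => a b c d.
by case: a; case: b; case: c; case: d.
Qed.

Definition spinv (s : sp) := SP (spp s)^-1%g (fun i => sps s ((spp s)^-1%g i)).
Lemma act_inv s x : act (spinv s) (act s x) = x.
Proof.
apply/ffunP => j.
rewrite -{1}(permK (spp s) j).
have -> : act (spinv s) (act s x) ((spp s)^-1%g (spp s j)) = act (spinv s) (act s x) (spp (spinv s) (spp s j)) by [].
by rewrite actE /= permK actE flK.
Qed.
Lemma par_inv s : par (spinv s) = par s.
Proof.
rewrite /par /= odd_permV; congr addb.
exact: big_perm.
Qed.

Definition sp1 := SP 1%g (fun _ => false).
Lemma act1 x : act sp1 x = x.
Proof. by apply/ffunP => i; rewrite ffunE /= invg1 perm1. Qed.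
Lemma par1 : par sp1 = false.
Proof. by rewrite /par /= odd_perm1 big1. Qed.

Definition supp (J : {set 'I_n}) (s : sp) :=
  forall i, i \notin J -> spp s i = i /\ sps s i = false.

Lemma supp_comp J s2 s1 : supp J s2 -> supp J s1 -> supp J (spcomp s2 s1).
Proof.
move=> h2 h1 i iJ; have [e1 f1] := h1 i iJ; have [e2 f2] := h2 i iJ.
by rewrite /spcomp /= permM e1 e2 f1 f2.
Qed.
Lemma supp_inv J s : supp J s -> supp J (spinv s).
Proof.
move=> h i iJ; have [e f] := h i iJ.
have e' : (spp s)^-1%g i = i by rewrite -{1}e permK.
by rewrite /= e' f.
Qed.
Lemma supp1 J : supp J sp1.
Proof. by move=> i _; rewrite /= perm1. Qed.
Lemma supp_sub (J J' : {set 'I_n}) s : J \subset J' -> supp J s -> supp J' s.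
Proof. by move=> sub h i iJ; apply: h; apply: contra iJ; apply: (subsetP sub). Qed.

Lemma supp_in (J : {set 'I_n}) s a : supp J s -> a \in J -> spp s a \in J.
Proof.
move=> h aJ; apply/negPn/negP => nJ; have [e _] := h _ nJ.
by move: (perm_inj e) => ea; move: nJ; rewrite ea aJ.
Qed.

Definition E (J : {set 'I_n}) (x y : P) :=
  exists s, [/\ supp J s, par s = false & act s x = y].

Lemma E_refl J x : E J x x.
Proof. by exists sp1; split; [exact: supp1 | exact: par1 | exact: act1]. Qed.
Lemma E_sym J x y : E J x y -> E J y x.
Proof.
case=> s [h1 h2 h3]; exists (spinv s); split; first exact: supp_inv.
  by rewrite par_inv. by rewrite -h3 act_inv.
Qed.
Lemma E_trans J x y z : E J x y -> E J y z -> E J x z.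
Proof.
case=> s [h1 h2 h3]; case=> t [g1 g2 g3]; exists (spcomp t s); split.
- exact: supp_comp. - by rewrite par_comp h2 g2. - by rewrite act_comp h3 g3.
Qed.

Definition psi' (i j : 'I_n) := SP (tperm i j) (fun t => t == j).
Lemma big_addb_eq (j : 'I_n) : \big[addb/false]_t (t == j) = true.
Proof.
rewrite (bigD1 j) //= big1 ?eqxx // => t /negbTE //.
Qed.
Lemma act_psi i j x : i != j -> act (psi' i j) x = psi i j x.
Proof.
move=> ij; apply/ffunP => t; rewrite !ffunE /= tpermV.
case: (t =P i) => [->|/eqP ti]; first by rewrite tpermL; case: eqP.
case: (t =P j) => [->|/eqP tj]; first by rewrite tpermR; case: eqP => // e; rewrite e eqxx in ij.
by rewrite tpermD 1?eq_sym //; case: eqP => // e; rewrite e eqxx in tj.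
Qed.
Lemma par_psi i j : i != j -> par (psi' i j) = false.
Proof. by move=> ij; rewrite /par /= odd_tperm ij big_addb_eq. Qed.
Lemma supp_psi (J : {set 'I_n}) i j : i \in J -> j \in J -> supp J (psi' i j).
Proof.
move=> iJ jJ t tJ; rewrite /= tpermD; last 2 first.
- by apply: contra tJ => /eqP <-. - by apply: contra tJ => /eqP <-.
split=> //; apply/negbTE; by apply: contra tJ => /eqP ->.
Qed.
End SP.


Section Words.
Variables (n k : nat).
Local Notation P := (pos n k).

Lemma psiE (i j t : 'I_n) (x : P) :
  psi i j x t = if t == i then rev_ord (x j) else if t == j then x i else x t.
Proof. by rewrite ffunE. Qed.
Lemma psi_i (i j : 'I_n) (x : P) : psi i j x i = rev_ord (x j).
Proof. by rewrite psiE eqxx. Qed.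
Lemma psi_j (i j : 'I_n) (x : P) : i != j -> psi i j x j = x i.
Proof. by move=> ij; rewrite psiE eq_sym (negbTE ij) eqxx. Qed.
Lemma psi_o (i j t : 'I_n) (x : P) : t != i -> t != j -> psi i j x t = x t.
Proof. by move=> ti tj; rewrite psiE (negbTE ti) (negbTE tj). Qed.

Lemma psiK (i j : 'I_n) (x : P) : i != j -> psi i j (psi j i x) = x.
Proof.
move=> ij; apply/ffunP => t; rewrite psiE.
case: (t =P i) => [->|/eqP ti]; first by rewrite psi_i rev_ordK.
case: (t =P j) => [->|/eqP tj]; first by rewrite psi_j 1?eq_sym.
by rewrite psi_o.
Qed.

Definition apply_word (w : seq ('I_n * 'I_n)) (x : P) : P :=
  foldr (fun ij p => psi ij.1 ij.2 p) x w.

Definition wok (J : {set 'I_n}) (w : seq ('I_n * 'I_n)) :=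
  all (fun ij => [&& ij.1 != ij.2, ij.1 \in J & ij.2 \in J]) w.

Lemma word_comb (J : {set 'I_n}) w (x : P) : wok J w ->
  exists g, is_comb g /\ apply_comb g x = apply_word w x.
Proof.
elim: w => [|[i j] w IH] /=; first by exists [::].
case/andP => /and3P [ij _ _] /IH [g [g1 g2]].
exists ((i, j, apply_word w x) :: g); split; first by rewrite /is_comb /= /move_ok /= ij.
rewrite /= g2 /apply_move.
have -> : [forall l, (l != i) && (l != j) ==> (apply_word w x l == apply_word w x l)].
  by apply/forallP => l; rewrite eqxx implybT.
by [].
Qed.

Lemma apply_comb_cat (g1 g2 : seq (move n k)) x :
  apply_comb (g1 ++ g2) x = apply_comb g1 (apply_comb g2 x).
Proof. by rewrite /apply_comb foldr_cat. Qed.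

Definition flsp (f : 'I_n -> bool) := SP 1%g f.
Lemma act_flsp f (x : P) : act (flsp f) x = [ffun t => fl (f t) (x t)].
Proof. by apply/ffunP => t; rewrite !ffunE /= invg1 perm1. Qed.

Lemma psi2 (i j : 'I_n) (x : P) : i != j ->
  psi i j (psi i j x) = act (flsp (fun t => (t == i) || (t == j))) x.
Proof.
move=> ij; have ji : j != i by rewrite eq_sym.
apply/ffunP => t; rewrite act_flsp.
case: (t =P i) => [->|/eqP ti] /=; first by rewrite psi_i psi_j // ffunE eqxx.
case: (t =P j) => [->|/eqP tj] /=; first by rewrite psi_j // psi_i ffunE eqxx orbT.
by rewrite !psi_o // ffunE (negbTE ti) (negbTE tj).
Qed.

Lemma gen_flips (J : {set 'I_n}) m (f : 'I_n -> bool) :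
  #|[pred t | f t]| <= m -> (forall t, t \notin J -> f t = false) ->
  \big[addb/false]_t f t = false ->
  exists w, wok J w /\ forall x, act (flsp f) x = apply_word w x.
Proof.
elim: m f => [|m IH] f hc hJ hp.
  exists [::]; split => // x; apply/ffunP => t; rewrite act_flsp ffunE /=.
  move: hc; rewrite leqn0 => /eqP/card0_eq/(_ t); rewrite inE => ->; by [].
case: (pickP [pred t | f t]) => [i fi|f0]; last first.
  exists [::]; split => // x; apply/ffunP => t; rewrite act_flsp ffunE /=.
  by have := f0 t; rewrite /= => ->.
have {}fi : f i := fi.
have [j /andP [ji fj]] : exists j, (j != i) && f j.
  apply/existsP; apply: contraFT hp => /existsPn H.
  rewrite (bigD1 i) //= big1 ?fi // => t ti.
  by have := H t; rewrite ti /= => /negbTE.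
pose f' := fun t => [&& f t, t != i & t != j].
have ptw : forall t, f t = ((t == i) || (t == j)) (+) f' t.
  move=> t; rewrite /f'; case: (t =P i) => [->|/eqP ti]; first by rewrite fi.
  case: (t =P j) => [->|/eqP tj]; first by rewrite fj orbT /=.
  by rewrite /= ?andbT.
have iJ : i \in J by apply: contraT => /hJ; rewrite fi.
have jJ : j \in J by apply: contraT => /hJ; rewrite fj.
have [w [w1 w2]] : exists w, wok J w /\ forall x, act (flsp f') x = apply_word w x.
  apply: IH.
  - have : #|[pred t | f' t]| <= #|[predD1 [pred t | f t] & i]|.
      apply: subset_leq_card; apply/subsetP => t; rewrite !inE /f' => /and3P [-> -> _].
      by [].
    move: hc; rewrite (cardD1 i) inE fi /= => h1 h2.
    by apply: leq_trans h2 _; move: h1; rewrite add1n ltnS.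
  - by move=> t tJ; rewrite /f' hJ.
  - move: hp; rewrite (eq_bigr _ (fun t _ => ptw t)) big_split /=.
    rewrite (bigD1 i) //= (bigD1 j) //= (eqxx i) (eqxx j) orbT big1 /= //.
    by move=> t /andP [ti tj]; rewrite (negbTE ti) (negbTE tj).
exists ((j, i) :: (j, i) :: w); split.
  by rewrite /wok /= ji iJ jJ.
move=> x /=; rewrite -w2 psi2 // -act_comp; congr act.
rewrite /spcomp /flsp /= mulg1; congr SP; apply: functional_extensionality => t /=.
rewrite perm1 ptw; case: (f' t); case: (t == i); case: (t == j); by [].
Qed.

Lemma gen (J : {set 'I_n}) m (s : sp n) :
  #|[pred t | spp s t != t]| <= m -> supp J s -> par s = false ->
  exists w, wok J w /\ forall x : P, act s x = apply_word w x.
Proof.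
elim: m s => [|m IH] s hc hJ hp.
  case: s hc hJ hp => p f /= hc hJ hp.
  have p1 : p = 1%g.
    apply/permP => t; rewrite perm1.
    by move: hc; rewrite leqn0 => /eqP/card0_eq/(_ t); rewrite inE => /negbFE/eqP.
  subst p; apply: (gen_flips (m := n)).
  - by apply: leq_trans (max_card _) (eq_leq (card_ord n)).
  - by move=> t /hJ [].
  - by move: hp; rewrite /par /= odd_perm1.
case: (pickP [pred t | spp s t != t]) => [i fi|f0]; last first.
  apply: IH => //; suff -> : #|[pred t | spp s t != t]| = 0 by [].
  by apply: eq_card0 => t; rewrite !inE; have := f0 t; rewrite /= => ->.
set j := spp s i.
have ij : i != j by rewrite eq_sym.
have iJ : i \in J by apply: contraT => /hJ [e _]; rewrite /= e eqxx in fi.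
have jJ : j \in J by apply: supp_in.
pose s' := spcomp (psi' j i) s.
have [w [w1 w2]] : exists w, wok J w /\ forall x : P, act s' x = apply_word w x.
  apply: IH.
  - have : #|[pred t | spp s' t != t]| <= #|[predD1 [pred t | spp s t != t] & i]|.
      apply: subset_leq_card; apply/subsetP => t; rewrite !inE /s' /spcomp /= permM.
      case: (t =P i) => [->|/eqP ti]; first by rewrite -/j tpermL eqxx.
      rewrite /=; apply: contra => /eqP st.
      rewrite st tpermD //; last by rewrite eq_sym.
      apply/eqP => tj; move/eqP: ti; apply; apply: (@perm_inj _ (spp s)).
      by rewrite st -/j tj.
    move: hc; rewrite (cardD1 i) inE (fi : spp s i != i) /= => h1 h2.
    by apply: leq_trans h2 _; move: h1; rewrite add1n ltnS.
  - by apply: supp_comp => //; apply: supp_psi.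
  - by rewrite par_comp par_psi 1?eq_sym.
exists ((i, j) :: w); split; first by rewrite /wok /= ij iJ jJ.
move=> x /=; rewrite -w2 /s' act_comp act_psi 1?eq_sym // psiK //.
Qed.

Lemma E_word (J : {set 'I_n}) (x y : P) : E J x y ->
  exists w, wok J w /\ apply_word w x = y.
Proof.
case=> s [h1 h2 h3].
have [w [w1 w2]] := gen (m := n) (s := s) (leq_trans (max_card _) (eq_leq (card_ord n))) h1 h2.
by exists w; split => //; rewrite -w2.
Qed.

End Words.

Arguments apply_move : simpl never.

Section Fix.
Variables (n k : nat).
Local Notation P := (pos n k).

Definition mid (v : 'I_k) := rev_ord v == v.
Definition sameD (u v : 'I_k) := (u == v) || (u == rev_ord v).

Definition nm2 (J : {set 'I_n}) (x : P) :=
  exists a b, [/\ a \in J, b \in J, a != b, ~~ mid (x a) & ~~ mid (x b)].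

Definition Jcomb (J : {set 'I_n}) (g : seq (move n k)) :=
  all (fun m : move n k => [&& m.1.1 != m.1.2, m.1.1 \in J & m.1.2 \in J]) g.

Lemma Jcomb_cat (J : {set 'I_n}) g1 g2 : Jcomb J (g1 ++ g2) = Jcomb J g1 && Jcomb J g2.
Proof. by rewrite /Jcomb all_cat. Qed.

Lemma Jcomb_is (J : {set 'I_n}) g : Jcomb J g -> is_comb g.
Proof.
elim: g => [|[[i j] c] g IH] //= /andP [/and3P [ij _ _] /IH h].
by rewrite /is_comb /= /move_ok /= ij.
Qed.

Lemma Jcomb_sub (J J' : {set 'I_n}) g : J \subset J' -> Jcomb J g -> Jcomb J' g.
Proof.
move=> sub; elim: g => [|[[i j] c] g IH] //= /andP [/and3P [ij iJ jJ] /IH h].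
by rewrite ij (subsetP sub _ iJ) (subsetP sub _ jJ) h.
Qed.

Lemma E_comb (J : {set 'I_n}) g (x : P) : Jcomb J g -> E J x (apply_comb g x).
Proof.
elim: g => [|[[i j] c] g IH] /=; first by move=> _; apply: E_refl.
case/andP => /and3P [ij iJ jJ] /IH h.
rewrite /apply_move; case: ifP => _ //.
apply: E_trans h _; exists (psi' i j); split.
- exact: supp_psi. - exact: par_psi. - exact: act_psi.
Qed.

Lemma mv_self (i j : 'I_n) (x : P) : apply_move (i, j, x) x = psi i j x.
Proof.
rewrite /apply_move.
by have -> : [forall l, (l != i) && (l != j) ==> (x l == x l)] by apply/forallP => l; rewrite eqxx implybT.
Qed.

Lemma mv_other (i j t : 'I_n) (x y : P) : t != i -> t != j -> y t != x t ->
  apply_move (i, j, x) y = y.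
Proof.
move=> ti tj yt; rewrite /apply_move.
case: ifP => // /forallP /(_ t); by rewrite ti tj /= (negbTE yt).
Qed.

Lemma pick3 (J : {set 'I_n}) (u v w : 'I_n) : 3 < #|J| ->
  exists t, [/\ t \in J, t != u, t != v & t != w].
Proof.
move=> hJ.
case: (pickP [pred t | [&& t \in J, t != u, t != v & t != w]]) => [t /and4P [*]|H].
  by exists t.
have sub : J \subset (u |: (v |: [set w])).
  apply/subsetP => t tJ; have := H t; rewrite /= tJ /= !inE.
  by case: (t == u); case: (t == v); case: (t == w).
have c3 : #|(u |: (v |: [set w]))| <= 3.
  rewrite !cardsU1 cards1; case: (_ \notin _); case: (_ \notin _); by [].
by move: (leq_trans (subset_leq_card sub) c3); rewrite leqNgt hJ.
Qed.

Lemma midrev v : mid v -> mid (rev_ord v).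
Proof. by rewrite /mid => /eqP e; rewrite e e. Qed.

Lemma final_mv (J : {set 'I_n}) l a c (x y1 y2 : P) :
  l \in J -> a \in J -> a != l -> x l != c ->
  sameD (x a) c || (x l == rev_ord c) ->
  (exists t, [/\ t != l, t != a & y1 t != x t]) ->
  (exists t, [/\ t != l, t != a & y2 t != x t]) ->
  exists g, [/\ Jcomb J g, apply_comb g y1 = y1, apply_comb g y2 = y2 & apply_comb g x l = c].
Proof.
move=> lJ aJ al xl hs [t1 [t1l t1a e1]] [t2 [t2l t2a e2]].
have la : l != a by rewrite eq_sym.
case: (x a =P rev_ord c) => [xa|/eqP xa].
  exists [:: (l, a, x)]; split.
  - by rewrite /Jcomb /= la lJ aJ.
  - by rewrite /= (mv_other (t := t1)).
  - by rewrite /= (mv_other (t := t2)).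
  - by rewrite /= mv_self psi_i xa rev_ordK.
case: (x a =P c) => [xa'|/eqP xa'].
  exists [:: (a, l, x)]; split.
  - by rewrite /Jcomb /= al lJ aJ.
  - by rewrite /= (mv_other (t := t1)).
  - by rewrite /= (mv_other (t := t2)).
  - by rewrite /= mv_self psi_j.
have xl' : x l = rev_ord c.
  by move: hs; rewrite /sameD (negbTE xa) (negbTE xa') /= => /eqP.
exists [:: (l, a, psi l a x); (l, a, x)]; split.
- by rewrite /Jcomb /= la lJ aJ.
- rewrite /= (mv_other (t := t1)) // (mv_other (t := t1)) //.
  by rewrite psi_o.
- rewrite /= (mv_other (t := t2)) // (mv_other (t := t2)) //.
  by rewrite psi_o.
- by rewrite /= mv_self mv_self psi_i psi_j // xl' rev_ordK.
Qed.

Fixpoint rotg (b b' : 'I_n) (i : nat) (x : P) : seq (move n k) :=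
  if i is i'.+1 then (b, b', iter i' (psi b b') x) :: rotg b b' i' x else [::].

Lemma rotg_apply b b' i (x : P) : apply_comb (rotg b b' i x) x = iter i (psi b b') x.
Proof. by elim: i => [|i IH] //=; rewrite IH mv_self. Qed.

Lemma iter_psi_o b b' i (x : P) t : t != b -> t != b' -> iter i (psi b b') x t = x t.
Proof. by move=> tb tb'; elim: i => [|i IH] //=; rewrite psi_o. Qed.

Lemma rotg_other b b' l i (x y : P) : l != b -> l != b' -> y l != x l ->
  apply_comb (rotg b b' i x) y = y.
Proof.
move=> lb lb' yl; elim: i => [|i IH] //=; rewrite IH (mv_other (t := l)) //.
by rewrite iter_psi_o.
Qed.

Lemma rotg_J (J : {set 'I_n}) b b' i (x : P) : b != b' -> b \in J -> b' \in J ->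
  Jcomb J (rotg b b' i x).
Proof. by move=> bb bJ bJ'; elim: i => [|i IH] //=; rewrite bb bJ bJ' IH. Qed.


Lemma rev_inj' (u v : 'I_k) : rev_ord u = rev_ord v -> u = v.
Proof. by move=> e; rewrite -(rev_ordK u) e rev_ordK. Qed.

Lemma fam1 (J : {set 'I_n}) l a b b' c (x y1 y2 : P) :
  l \in J -> a \in J -> b \in J -> b' \in J ->
  a != l -> b != l -> b' != l -> b != a -> b' != a -> b' != b ->
  ~~ mid (x b) -> x l != c -> sameD (x a) c || (x l == rev_ord c) ->
  y1 l = c -> y2 l = c ->
  exists g, [/\ Jcomb J g, apply_comb g y1 = y1, apply_comb g y2 = y2 & apply_comb g x l = c].
Proof.
move=> lJ aJ bJ bJ' al bl bl' ba ba' bb xb xl hs e1 e2.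
have lb : l != b by rewrite eq_sym. have lb' : l != b' by rewrite eq_sym.
have ab : a != b by rewrite eq_sym. have ab' : a != b' by rewrite eq_sym.
have bb' : b != b' by rewrite eq_sym.
pose xi i := iter i (psi b b') x.
have key : forall i, (exists t, [/\ t != l, t != a & y1 t != xi i t]) ->
    (exists t, [/\ t != l, t != a & y2 t != xi i t]) ->
    exists g, [/\ Jcomb J g, apply_comb g y1 = y1, apply_comb g y2 = y2 & apply_comb g x l = c].
  move=> i u1 u2.
  have xil : xi i l = x l by rewrite /xi iter_psi_o.
  have xia : xi i a = x a by rewrite /xi iter_psi_o.
  have [gf [g1 g2 g3 g4]] := final_mv (J := J) (c := c) lJ aJ al
    (eq_ind_r (fun v => v != c) xl xil) (eq_ind_r (fun v => sameD v c || (xi i l == rev_ord c)) (eq_ind_r (fun v => sameD (x a) c || (v == rev_ord c)) hs xil) xia) u1 u2.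
  exists (gf ++ rotg b b' i x); split.
  - by rewrite Jcomb_cat g1 rotg_J.
  - by rewrite apply_comb_cat (rotg_other (l := l)) ?g2 // e1 eq_sym.
  - by rewrite apply_comb_cat (rotg_other (l := l)) ?g3 // e2 eq_sym.
  - by rewrite apply_comb_cat rotg_apply.
pose blk (y : P) i := (y b == xi i b) && (y b' == xi i b').
have ub : forall (y : P) i, ~~ blk y i -> exists t, [/\ t != l, t != a & y t != xi i t].
  move=> y i; rewrite /blk negb_and => /orP [h|h]; by [exists b | exists b'].
have x1b : xi 1 b = rev_ord (x b') by rewrite /xi /= psi_i.
have x1b' : xi 1 b' = x b by rewrite /xi /= psi_j.
have x2b : xi 2 b = rev_ord (x b) by rewrite /xi /= psi_i psi_j.
have x2b' : xi 2 b' = rev_ord (x b') by rewrite /xi /= psi_j // psi_i.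
have x0b : xi 0 b = x b by []. have x0b' : xi 0 b' = x b' by [].
have nm : rev_ord (x b) != x b by [].
have h01 : forall y, blk y 0 -> blk y 1 -> False.
  move=> y; rewrite /blk x0b x0b' x1b x1b' => /andP [/eqP p1 /eqP p2] /andP [/eqP p3 /eqP p4].
  by move/eqP: nm; apply; rewrite -{2}p1 p3 -p2 p4.
have h02 : forall y, blk y 0 -> blk y 2 -> False.
  move=> y; rewrite /blk x0b x0b' x2b x2b' => /andP [/eqP p1 /eqP p2] /andP [/eqP p3 /eqP p4].
  by move/eqP: nm; apply; rewrite -p3 p1.
have h12 : forall y, blk y 1 -> blk y 2 -> False.
  move=> y; rewrite /blk x1b x1b' x2b x2b' => /andP [/eqP p1 /eqP p2] /andP [/eqP p3 /eqP p4].
  have e : x b' = x b by apply: rev_inj'; rewrite -p1 p3.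
  by move/eqP: nm; apply; rewrite -e -p4 p2 e.
case B10: (blk y1 0); case B20: (blk y2 0); case B11: (blk y1 1); case B21: (blk y2 1);
case B12: (blk y1 2); case B22: (blk y2 2);
first [ by apply: (key 0); apply: ub; rewrite ?B10 ?B20
      | by apply: (key 1); apply: ub; rewrite ?B11 ?B21
      | by apply: (key 2); apply: ub; rewrite ?B12 ?B22
      | by case: (h01 y1 B10 B11) | by case: (h01 y2 B20 B21)
      | by case: (h02 y1 B10 B12) | by case: (h02 y2 B20 B22)
      | by case: (h12 y1 B11 B12) | by case: (h12 y2 B21 B22) ].
Qed.


Lemma nm2_out (J : {set 'I_n}) (z : P) l : nm2 J z ->
  exists u, [/\ u \in J, u != l & ~~ mid (z u)].
Proof.
case=> a [b [aJ bJ ab ma mb]]; case: (a =P l) => [al|/eqP al]; last by exists a.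
by exists b; split => //; rewrite -al eq_sym.
Qed.

Lemma neq_mid (u v : 'I_k) : mid u -> ~~ mid v -> v != u.
Proof. by move=> mu; apply: contra => /eqP ->. Qed.

Lemma fix_pt (J : {set 'I_n}) l c (x y1 y2 : P) :
  3 < #|J| -> l \in J -> y1 l = c -> y2 l = c ->
  (exists a0, a0 \in J /\ sameD (x a0) c) -> nm2 J x -> nm2 J y1 -> nm2 J y2 ->
  exists g, [/\ Jcomb J g, apply_comb g y1 = y1, apply_comb g y2 = y2 & apply_comb g x l = c].
Proof.
move=> cJ lJ e1 e2 [a0 [a0J ha0]] nx ny1 ny2.
case: (x l =P c) => [xl|/eqP xl]; first by exists [::].
case: (x l =P rev_ord c) => [xlr|/eqP xlr].
  have [b [bJ bl mb]] := nm2_out l nx.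
  have [a [aJ al ab _]] := pick3 l b b cJ.
  have [b' [bJ' bl' ba' bb']] := pick3 l a b cJ.
  apply: (fam1 (a := a) (b := b) (b' := b')) => //; first by rewrite eq_sym.
  by rewrite xlr eqxx orbT.
have a0l : a0 != l.
  by apply/eqP => e; move: ha0; rewrite e /sameD (negbTE xl) (negbTE xlr).
case: (pickP [pred b | [&& b \in J, b != l, b != a0 & ~~ mid (x b)]]) => [b /and4P [bJ bl ba mb]|H].
  have [b' [bJ' bl' ba' bb']] := pick3 l a0 b cJ.
  by apply: (fam1 (a := a0) (b := b) (b' := b')) => //; rewrite ha0.
have Hm : forall t, t \in J -> t != l -> t != a0 -> mid (x t).
  by move=> t tJ tl ta; have := H t; rewrite /= tJ tl ta /= => /negbFE.
have [u1 [u1J u1l m1]] := nm2_out l ny1.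
have [u2 [u2J u2l m2]] := nm2_out l ny2.
have [a [aJ al au1 au2]] := pick3 l u1 u2 cJ.
case: (a =P a0) => [aa0|/eqP aa0].
  subst a; apply: (final_mv lJ a0J a0l xl); first by rewrite ha0.
  - exists u1; split => //; first by rewrite eq_sym.
    by apply: neq_mid m1; apply: Hm => //; rewrite eq_sym.
  - exists u2; split => //; first by rewrite eq_sym.
    by apply: neq_mid m2; apply: Hm => //; rewrite eq_sym.
pose x' := psi a0 a x.
have a0a : a0 != a by rewrite eq_sym.
have la0 : l != a0 by rewrite eq_sym. have la : l != a by rewrite eq_sym.
have x'l : x' l = x l by rewrite /x' psi_o.
have x'a : x' a = x a0 by rewrite /x' psi_j.
have x'm : forall u, u \in J -> u != l -> u != a -> mid (x' u).
  move=> u uJ ul ua; case: (u =P a0) => [->|/eqP ua0].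
    by rewrite /x' psi_i; apply: midrev; apply: Hm.
  by rewrite /x' psi_o //; apply: Hm.
have [gf [g1 g2 g3 g4]] : exists g, [/\ Jcomb J g, apply_comb g y1 = y1, apply_comb g y2 = y2 & apply_comb g x' l = c].
  apply: (final_mv lJ aJ al); first by rewrite x'l.
  - by rewrite x'a ha0.
  - exists u1; split => //; first by rewrite eq_sym.
    by apply: neq_mid m1; apply: x'm => //; rewrite eq_sym.
  - exists u2; split => //; first by rewrite eq_sym.
    by apply: neq_mid m2; apply: x'm => //; rewrite eq_sym.
exists (gf ++ [:: (a0, a, x)]); split.
- by rewrite Jcomb_cat g1 /Jcomb /= a0a a0J aJ.
- by rewrite apply_comb_cat /= (mv_other (t := l)) // e1 eq_sym.
- by rewrite apply_comb_cat /= (mv_other (t := l)) // e2 eq_sym.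
- by rewrite apply_comb_cat /= mv_self.
Qed.

End Fix.


Section Step.
Variables (n k : nat).
Hypothesis hk : 1 < k.
Local Notation P := (pos n k).

Definition sym (J : {set 'I_n}) (x : P) :=
  exists s, [/\ supp J s, par s = true & act s x = x].

Lemma mid_fl b (v : 'I_k) : mid (fl b v) = mid v.
Proof.
case: b => //=; apply/idP/idP => h; last exact: midrev.
by rewrite -(rev_ordK v); apply: midrev.
Qed.

Lemma inb_rev (v : 'I_k) : in_bound (rev_ord v) = in_bound v.
Proof.
rewrite /in_bound /=; apply/idP/idP => /orP [] /eqP h; apply/orP.
- by right; apply/eqP; have := ltn_ord v; lia.
- by left; apply/eqP; have := ltn_ord v; lia.
- by right; apply/eqP; have := ltn_ord v; lia.
- by left; apply/eqP; have := ltn_ord v; lia.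
Qed.

Lemma inb_fl b (v : 'I_k) : in_bound (fl b v) = in_bound v.
Proof. by case: b => //=; rewrite inb_rev. Qed.

Lemma inb_nmid (v : 'I_k) : in_bound v -> ~~ mid v.
Proof.
have := hk; rewrite /in_bound /mid => hk1 /orP [] /eqP h; apply/negP => /eqP /(congr1 val) /=;
  move: h; rewrite /= => h; lia.
Qed.

Lemma E_out (J : {set 'I_n}) (x y : P) i : E J x y -> i \notin J -> y i = x i.
Proof.
case=> s [h1 _ <-] iJ; have [e f] := h1 i iJ.
by rewrite -{1}e actE f.
Qed.

Lemma E_pt (J : {set 'I_n}) (x y : P) : E J x y ->
  exists s, [/\ supp J s, par s = false & forall a, y (spp s a) = fl (sps s a) (x a)].
Proof. by case=> s [h1 h2 <-]; exists s; split => // a; rewrite actE. Qed.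

Lemma nm2_E (J : {set 'I_n}) (x y : P) : E J x y -> nm2 J x -> nm2 J y.
Proof.
move=> /E_pt [s [h1 _ h3]] [a [b [aJ bJ ab ma mb]]].
exists (spp s a), (spp s b); split; try exact: supp_in.
- by apply: contra ab => /eqP /perm_inj ->.
- by rewrite h3 mid_fl. - by rewrite h3 mid_fl.
Qed.

Lemma inb_E (J : {set 'I_n}) (x y : P) : E J x y ->
  (exists z, z \in J /\ in_bound (x z)) -> exists z, z \in J /\ in_bound (y z).
Proof.
move=> /E_pt [s [h1 _ h3]] [z [zJ hz]]; exists (spp s z); split; first exact: supp_in.
by rewrite h3 inb_fl.
Qed.

Lemma comb_out (J : {set 'I_n}) g (x : P) i : Jcomb J g -> i \notin J -> apply_comb g x i = x i.
Proof. by move=> hg iJ; apply: E_out iJ; apply: E_comb. Qed.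

Lemma in_D1 (J : {set 'I_n}) l i : (i \in J :\ l) = (i != l) && (i \in J).
Proof. by rewrite !inE. Qed.

Lemma act_fix1 (x : P) l : mid (x l) -> act (flsp (fun u => u == l)) x = x.
Proof.
move=> m; apply/ffunP => u; rewrite act_flsp ffunE.
by case: (u =P l) => [->|] //=; move/eqP: m.
Qed.

Lemma E_restrict (J : {set 'I_n}) l (x y : P) :
  l \in J -> E J x y -> y l = x l ->
  (sym (J :\ l) x \/ (~~ mid (x l) /\ forall t, t \in J -> t != l -> ~~ sameD (x t) (x l))) ->
  E (J :\ l) x y.
Proof.
move=> lJ [s [h1 h2 h3]] yl hyp.
set t := (spp s)^-1%g l.
have st : spp s t = l by rewrite /t permKV.
have ylt : x l = fl (sps s t) (x t) by rewrite -yl -h3 -{1}st actE.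
have [s'' [g1 g2 g3]] : exists s'', [/\ supp (J :\ l) s'', act s'' x = y &
    (par s'' = false \/ mid (x l) \/ exists t, [/\ t \in J, t != l & sameD (x t) (x l)])].
  case: (t =P l) => [tl|/eqP tl].
    rewrite tl in st ylt.
    case sl: (sps s l).
      exists (spcomp s (flsp (fun u => u == l))).
      have ml : mid (x l) by move: ylt; rewrite sl /= /mid => <-.
      split; last by right; left.
      + move=> i; rewrite in_D1 negb_and negbK => /orP [/eqP ->|iJ].
          rewrite /spcomp /= mul1g st; split => //.
          have -> : ((1%g : {perm 'I_n}) l) = l by apply: perm1.
          by rewrite sl eqxx.
        have [e f] := h1 i iJ.
        have il : i != l by apply: contra iJ => /eqP ->.
        rewrite /spcomp /= mul1g e; split => //.
        have -> : ((1%g : {perm 'I_n}) i) = i by apply: perm1.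
        by rewrite f (negbTE il).
      + by rewrite act_comp act_fix1.
    exists s; split; [|by [] | by left].
    move=> i; rewrite in_D1 negb_and negbK => /orP [/eqP ->|iJ]; first by [].
    exact: h1.
  have tJ : t \in J.
    apply: contraT => tJ; have [e _] := h1 t tJ; by rewrite st in e; rewrite e eqxx in tl.
  pose nu := SP (tperm l t) (fun u => sps s t && ((u == l) || (u == t))).
  have anu : act nu x = x.
    apply/ffunP => u; rewrite ffunE /= tpermV.
    case: (u =P l) => [->|/eqP ul]; first by rewrite tpermL (eqxx t) orbT andbT ylt.
    case: (u =P t) => [->|/eqP ut]; first by rewrite tpermR (eqxx l) /= andbT ylt flK.
    rewrite tpermD; [|by rewrite eq_sym|by rewrite eq_sym].
    by rewrite (negbTE ul) (negbTE ut) andbF.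
  exists (spcomp s nu); split.
  - move=> i; rewrite in_D1 negb_and negbK => /orP [/eqP ->|iJ].
      by rewrite /spcomp /= permM tpermL st eqxx /= andbT addbb.
    have [e f] := h1 i iJ.
    have il : i != l by apply: contra iJ => /eqP ->.
    have it : i != t by apply: contra iJ => /eqP ->.
    rewrite /spcomp /= permM tpermD; [|by rewrite eq_sym|by rewrite eq_sym].
    by rewrite e f (negbTE il) (negbTE it) andbF.
  - by rewrite act_comp anu.
  - right; right; exists t; split => //.
    move: ylt; rewrite /sameD; case: (sps s t) => /= ->; first by rewrite rev_ordK eqxx orbT.
    by rewrite eqxx.
case P'': (par s''); last by exists s''.
case: hyp => [[nu [n1 n2 n3]]|[nm nd]].
  exists (spcomp s'' nu); split.
  - exact: supp_comp. - by rewrite par_comp P'' n2. - by rewrite act_comp n3.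
case: g3 => [|[m|[t' [t'J t'l sd]]]]; first by rewrite P''.
  by rewrite m in nm.
by have := nd t' t'J t'l; rewrite sd.
Qed.

Lemma big_two (u v : 'I_n) : u != v -> \big[addb/false]_t ((t == u) || (t == v)) = false.
Proof.
move=> uv; rewrite (bigD1 u) //= (bigD1 v) /=; last by rewrite eq_sym uv.
rewrite (eqxx u) (eqxx v) orbT big1 //.
by move=> t /andP [/negbTE -> /negbTE ->].
Qed.

Lemma sym_swap (J' : {set 'I_n}) (x : P) u v : u \in J' -> v \in J' -> u != v ->
  sameD (x u) (x v) -> sym J' x.
Proof.
move=> uJ vJ uv sd.
pose e := x u != x v.
have xuv : x u = fl e (x v).
  rewrite /e; case: (x u =P x v) => //= /eqP ne.
  by move: sd; rewrite /sameD (negbTE ne) /= => /eqP.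
exists (SP (tperm u v) (fun t => e && ((t == u) || (t == v)))); split.
- move=> i iJ; have iu : i != u by apply: contra iJ => /eqP ->.
  have iv : i != v by apply: contra iJ => /eqP ->.
  rewrite /= tpermD; [|by rewrite eq_sym|by rewrite eq_sym].
  by rewrite (negbTE iu) (negbTE iv) andbF.
- rewrite /par /= odd_tperm uv; case: (e) => /=; first by rewrite big_two.
  by rewrite big1.
- apply/ffunP => t; rewrite ffunE /= tpermV.
  case: (t =P u) => [->|/eqP tu]; first by rewrite tpermL (eqxx v) orbT andbT xuv.
  case: (t =P v) => [->|/eqP tv]; first by rewrite tpermR (eqxx u) andbT xuv flK.
  rewrite tpermD; [|by rewrite eq_sym|by rewrite eq_sym].
  by rewrite (negbTE tu) (negbTE tv) andbF.
Qed.

Lemma sym_mid (J' : {set 'I_n}) (x : P) m : m \in J' -> mid (x m) -> sym J' x.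
Proof.
move=> mJ hm; exists (flsp (fun u => u == m)); split.
- move=> i iJ; have im : i != m by apply: contra iJ => /eqP ->.
  split; [exact: perm1 | exact: negbTE].
- by rewrite /par /= odd_perm1 big_addb_eq.
- exact: act_fix1.
Qed.

Lemma select (J : {set 'I_n}) (x : P) : 3 < #|J| ->
  (exists z, z \in J /\ in_bound (x z)) -> nm2 J x ->
  exists l, [/\ l \in J, (exists z, z \in J :\ l /\ in_bound (x z)), nm2 (J :\ l) x &
    (sym (J :\ l) x \/ (~~ mid (x l) /\ forall t, t \in J -> t != l -> ~~ sameD (x t) (x l)))].
Proof.
move=> cJ [z [zJ hz]] [a [b [aJ bJ ab ma mb]]].
have [w [wJ wz mw]] : exists w, [/\ w \in J, w != z & ~~ mid (x w)].
  case: (a =P z) => [az|/eqP az]; last by exists a.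
  by exists b; split => //; rewrite -az eq_sym.
have mz := inb_nmid hz.
have inD : forall i l, i \in J -> l != i -> i \in J :\ l by move=> i l iJ il; rewrite in_D1 eq_sym il.
case: (pickP [pred m | [&& m \in J, m != z, m != w & mid (x m)]]) => [m /and4P [mJ mz' mw' mm]|Hm].
  have [l [lJ lz lw lm]] := pick3 z w m cJ.
  exists l; split => //.
  - by exists z; split => //; exact: inD.
  - by exists z, w; split => //; try exact: inD; rewrite eq_sym.
  - by left; apply: (sym_mid (m := m)) => //; exact: inD.
have allnm : forall t, t \in J -> ~~ mid (x t).
  move=> t tJ; case: (t =P z) => [->|/eqP tz] //; case: (t =P w) => [->|/eqP tw] //.
  by have := Hm t; rewrite /= tJ tz tw /= => ->.
case: (pickP [pred p : 'I_n * 'I_n | [&& p.1 \in J, p.2 \in J, p.1 != p.2 & sameD (x p.1) (x p.2)]])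
  => [[u v] /and4P [uJ vJ uv sd]|Hr].
  have sw : forall l, l != u -> l != v -> sym (J :\ l) x.
    by move=> l lu lv; apply: (sym_swap (u := u) (v := v)) => //; exact: inD.
  case hu: (in_bound (x u)).
    have [l [lJ lu lv _]] := pick3 u v v cJ.
    exists l; split => //; last by left; apply: sw.
    - by exists u; split => //; exact: inD.
    - exists u, v; split => //; try exact: inD; first exact: inb_nmid.
      apply: inb_nmid; move: sd hu; rewrite /sameD => /orP [] /eqP ->; by rewrite ?inb_rev.
  have [l [lJ lz lu lv]] := pick3 z u v cJ.
  exists l; split => //; last by left; apply: sw.
  - by exists z; split => //; exact: inD.
  - exists u, v; split => //; try exact: inD; exact: allnm.
have [l [lJ lz lw _]] := pick3 z w w cJ.
exists l; split => //.
- by exists z; split => //; exact: inD.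
- by exists z, w; split => //; try exact: inD; rewrite eq_sym.
- right; split; first exact: allnm.
  by move=> t tJ tl; have := Hr (t, l); rewrite /= tJ lJ tl /= => ->.
Qed.

End Step.


Section Desc.
Variables (n k : nat).
Hypothesis hk : 1 < k.
Local Notation P := (pos n k).

Definition Inv (J : {set 'I_n}) (x1 x2 x3 : P) :=
  [/\ (forall i, i \notin J -> x2 i = x1 i /\ x3 i = x1 i), E J x1 x2, E J x1 x3,
      (exists z, z \in J /\ in_bound (x1 z)) & nm2 J x1].

Lemma sameD_E (J : {set 'I_n}) (x y : P) l : l \in J -> E J x y ->
  exists a0, a0 \in J /\ sameD (y a0) (x l).
Proof.
move=> lJ /E_pt [s [h1 _ h3]]; exists (spp s l); split; first exact: supp_in.
rewrite h3 /sameD; case: (sps s l) => /=; first by rewrite eqxx orbT.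
by rewrite eqxx.
Qed.

Lemma step (J : {set 'I_n}) (x1 x2 x3 : P) : 3 < #|J| -> Inv J x1 x2 x3 ->
  exists g l, [/\ Jcomb J g, l \in J &
    Inv (J :\ l) (apply_comb g x1) (apply_comb g x2) (apply_comb g x3)].
Proof.
move=> cJ [hout e2 e3 hz hnm].
have [l [lJ hz' hnm' hsel]] := select hk cJ hz hnm.
have [g2 [g2J g2a g2b g2c]] : exists g, [/\ Jcomb J g, apply_comb g x1 = x1,
    apply_comb g x1 = x1 & apply_comb g x2 l = x1 l].
  apply: fix_pt => //; first exact: (sameD_E lJ e2).
  exact: nm2_E e2 hnm.
set X2 := apply_comb g2 x2.
set x3' := apply_comb g2 x3.
have e2' : E J x1 X2 by apply: E_trans e2 _; apply: E_comb.
have e3' : E J x1 x3' by apply: E_trans e3 _; apply: E_comb.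
have [g3 [g3J g3a g3b g3c]] : exists g, [/\ Jcomb J g, apply_comb g x1 = x1,
    apply_comb g X2 = X2 & apply_comb g x3' l = x1 l].
  apply: fix_pt => //; first exact: (sameD_E lJ e3').
  - exact: nm2_E e3' hnm.
  - exact: nm2_E e2' hnm.
exists (g3 ++ g2), l; split => //; first by rewrite Jcomb_cat g3J g2J.
rewrite !apply_comb_cat g2a g3a -/X2 -/x3' g3b.
have e3'' : E J x1 (apply_comb g3 x3') by apply: E_trans e3' _; apply: E_comb.
split => //.
- move=> i; rewrite in_D1 negb_and negbK => /orP [/eqP ->|iJ]; first by split.
  have [o2 o3] := hout i iJ.
  by rewrite /X2 /x3' !(comb_out _ _ iJ) // -?o2 -?o3.
- apply: E_restrict => //.
- apply: E_restrict => //.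
Qed.

Lemma descend m : forall (J : {set 'I_n}) (x1 x2 x3 : P), #|J| = m + 3 -> Inv J x1 x2 x3 ->
  exists g (I : {set 'I_n}), [/\ is_comb g, #|I| = 3 &
    Inv I (apply_comb g x1) (apply_comb g x2) (apply_comb g x3)].
Proof.
elim: m => [|m IH] J x1 x2 x3 cJ hI; first by exists [::], J.
have c4 : 3 < #|J| by rewrite cJ; lia.
have [g [l [gJ lJ hI']]] := step c4 hI.
have c' : #|J :\ l| = m + 3 by move: cJ; rewrite (cardsD1 l J) lJ; lia.
have [g' [I [g'c cI hI'']]] := IH _ _ _ _ c' hI'.
exists (g' ++ g), I; split => //.
- by rewrite /is_comb all_cat; apply/andP; split; [exact: g'c | exact: (Jcomb_is gJ)].
- by rewrite !apply_comb_cat.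
Qed.

End Desc.


Section Restr.
Variables (n k : nat) (i1 i2 i3 : 'I_n).
Hypotheses (h12 : i1 < i2) (h23 : i2 < i3).
Local Notation P := (pos n k).

Definition o0 : 'I_3 := @Ordinal 3 0 isT.
Definition o1 : 'I_3 := @Ordinal 3 1 isT.
Definition o2 : 'I_3 := @Ordinal 3 2 isT.
Definition e3 (t : 'I_3) : 'I_n := tnth [tuple i1; i2; i3] t.
Definition ei (a : 'I_n) : 'I_3 := if a == i1 then o0 else if a == i2 then o1 else o2.

Lemma ord3_cases (t : 'I_3) : [\/ t = o0, t = o1 | t = o2].
Proof.
case: t => [[|[|[|m]]] hm]; [constructor 1|constructor 2|constructor 3|by []];
  by apply: val_inj.
Qed.

Lemma e3_0 : e3 o0 = i1. Proof. by []. Qed.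
Lemma e3_1 : e3 o1 = i2. Proof. by []. Qed.
Lemma e3_2 : e3 o2 = i3. Proof. by []. Qed.

Definition inI (a : 'I_n) := [|| a == i1, a == i2 | a == i3].

Lemma n12 : i1 != i2. Proof. by rewrite neq_ltn h12. Qed.
Lemma n23 : i2 != i3. Proof. by rewrite neq_ltn h23. Qed.
Lemma n13 : i1 != i3. Proof. by rewrite neq_ltn (ltn_trans h12 h23). Qed.

Lemma e3ei a : inI a -> e3 (ei a) = a.
Proof.
rewrite /inI /ei; case: (a =P i1) => [->|_] //=; case: (a =P i2) => [->|_] //=.
by move/eqP ->.
Qed.

Lemma e3_inj : injective e3.
Proof.
move=> s t; have := n12; have := n23; have := n13.
by case: (ord3_cases s) => ->; case: (ord3_cases t) => -> //;
  rewrite ?e3_0 ?e3_1 ?e3_2 => a b c d; rewrite d eqxx in a b c *.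
Qed.

Lemma e3_eq t a : inI a -> (e3 t == a) = (t == ei a).
Proof.
move=> ha; apply/eqP/eqP => [<-|->]; last exact: e3ei.
by apply: e3_inj; rewrite e3ei //; rewrite /inI; case: (ord3_cases t) => ->;
  rewrite ?e3_0 ?e3_1 ?e3_2 eqxx ?orbT.
Qed.

Lemma restrE (x : P) t : restr3 i1 i2 i3 x t = x (e3 t).
Proof. by rewrite ffunE. Qed.

Lemma restr_psi a b (x : P) : inI a -> inI b ->
  restr3 i1 i2 i3 (psi a b x) = psi (ei a) (ei b) (restr3 i1 i2 i3 x).
Proof.
move=> ha hb; apply/ffunP => t; rewrite restrE !psiE !restrE !e3ei // -!e3_eq //.
Qed.

Lemma restr_word (w : seq ('I_n * 'I_n)) (J : {set 'I_n}) (x : P) :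
  (forall a, a \in J -> inI a) -> wok J w ->
  exists w3, wok [set: 'I_3] w3 /\
    restr3 i1 i2 i3 (apply_word w x) = apply_word w3 (restr3 i1 i2 i3 x).
Proof.
move=> hJ; elim: w => [|[a b] w IH] /=; first by exists [::].
case/andP => /and3P [ab aJ bJ] /IH [w3 [h1 h2]].
exists ((ei a, ei b) :: w3); split.
  apply/andP; split => //; apply/and3P; split; rewrite ?in_setT //.
  by apply/eqP => /= e; move/eqP: ab; apply; rewrite -(e3ei (hJ _ aJ)) e e3ei //; apply: hJ.
have c1 : forall (d : nat) (u v : 'I_d) ww (y : pos d k), apply_word ((u, v) :: ww) y = psi u v (apply_word ww y) by [].
by rewrite !c1 -h2 restr_psi //; apply: hJ.
Qed.

End Restr.


Section Frame.
Variables (k : nat).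
Hypothesis hk : 1 < k.

Lemma mid_val (v : 'I_k) : mid v -> odd k /\ val v = (k.-1)./2.
Proof. rewrite /mid => /eqP /(congr1 val) /= h; have := ltn_ord v; split; lia. Qed.

Lemma val_mid (v : 'I_k) : odd k -> val v = (k.-1)./2 -> mid v.
Proof. move=> ok h; apply/eqP/val_inj => /=; move: h; rewrite /= => h; have := ltn_ord v; lia. Qed.

Lemma mid_uniq (u v : 'I_k) : mid u -> mid v -> u = v.
Proof. by move=> /mid_val [_ hu] /mid_val [_ hv]; apply: val_inj; rewrite /= hu hv. Qed.

Lemma inb_cases (u v : 'I_k) : in_bound u -> in_bound v -> u = v \/ u = rev_ord v.
Proof.
rewrite /in_bound => /orP [] /eqP hu /orP [] /eqP hv;
  [left|right|right|left]; apply: val_inj => /=; move: hu hv; rewrite /= => hu hv; have := ltn_ord v; have := ltn_ord u; lia.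
Qed.

Variable d : nat.
Local Notation P := (pos d k).

Lemma frame_to (q : P) : odd k -> frame_pos q ->
  exists z, in_bound (q z) /\ forall t, t != z -> mid (q t).
Proof.
move=> ok /andP [/cards1P [z hz] /forallP hf]; exists z; split.
  have hzz : z \in [set i | in_bound (q i)] by rewrite hz set11.
  by move: hzz; rewrite inE.
move=> t tz; have := hf t; case/orP => [hb|/eqP hv]; last exact: val_mid.
have : t \in [set i | in_bound (q i)] by rewrite inE.
by rewrite hz inE (negbTE tz).
Qed.

Lemma frame_from (q : P) : odd k ->
  (exists z, in_bound (q z) /\ forall t, t != z -> mid (q t)) -> frame_pos q.
Proof.
move=> ok [z [hz hm]]; apply/andP; split.
  apply/cards1P; exists z; apply/setP => t; rewrite !inE.
  case: (t =P z) => [->|/eqP tz] //=; apply/negbTE; apply/negP => hb.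
  by have := inb_nmid hk hb; rewrite hm.
apply/forallP => t; case: (t =P z) => [->|/eqP tz]; first by rewrite hz.
by rewrite (proj2 (mid_val (hm t tz))) eqxx orbT.
Qed.

End Frame.


Section Main.
Variables (n k : nat).
Hypothesis hk : 1 < k.
Local Notation P := (pos n k).

Lemma is_Jcomb (g : seq (move n k)) : is_comb g -> Jcomb [set: 'I_n] g.
Proof.
elim: g => [|[[i j] c] g IH] //= /andP [hij /IH h].
by move: hij; rewrite /Jcomb /= /move_ok /= => ->; rewrite !in_setT.
Qed.

Lemma class_E (q0 q : P) : conn_class q0 q -> E [set: 'I_n] q0 q.
Proof. by case=> s [hs <-]; apply: E_comb; apply: is_Jcomb. Qed.

Lemma ext_inb (p : P) : external p -> exists z, z \in [set: 'I_n] /\ in_bound (p z).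
Proof. by case/existsP => z hz; exists z; rewrite in_setT. Qed.

Lemma other (z : 'I_n) : 1 < n -> exists m : 'I_n, m != z.
Proof.
move=> hn; have h0 : 0 < n by lia.
case: (val z =P 0) => [e|/eqP e].
  by exists (Ordinal hn); apply/eqP => /(congr1 val) /=; rewrite e.
by exists (Ordinal h0); apply/eqP => /(congr1 val) /= h; move: e; rewrite /= -h.
Qed.

Lemma frame_word (x y : P) z z' : 1 < n ->
  in_bound (x z) -> (forall t, t != z -> mid (x t)) ->
  in_bound (y z') -> (forall t, t != z' -> mid (y t)) ->
  exists w, wok [set: 'I_n] w /\ apply_word w x = y.
Proof.
move=> hn bx mx bY mY.
have mm : forall t u, mid (x t) -> mid (y u) -> x t = y u by move=> t u; apply: (mid_uniq hk).
have c1 : forall (u v : 'I_n) ww (p : P), apply_word ((u, v) :: ww) p = psi u v (apply_word ww p) by [].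
have [e|e] := inb_cases hk bY bx.
  case: (z' =P z) => [ez|/eqP ez].
    subst z'; exists [::]; split => //; apply/ffunP => t /=.
    case: (t =P z) => [->|/eqP tz] //; by apply: mm; [apply: mx | apply: mY].
  have zz : z != z' by rewrite eq_sym.
  exists [:: (z, z')]; split; first by rewrite /wok /= zz !in_setT.
  apply/ffunP => t; rewrite c1 /=.
  case: (t =P z') => [->|/eqP tz']; first by rewrite psi_j.
  case: (t =P z) => [->|/eqP tz]; first by rewrite psi_i; apply: (mid_uniq hk); [apply: midrev; apply: mx | apply: mY].
  by rewrite psi_o //; apply: mm; [apply: mx | apply: mY].
case: (z' =P z) => [ez|/eqP ez].
  subst z'; have [m mz] := other z hn.
  have zm : z != m by rewrite eq_sym.
  exists [:: (z, m); (z, m)]; split; first by rewrite /wok /= zm !in_setT.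
  apply/ffunP => t; rewrite !c1 /= psi2 // act_flsp ffunE.
  case: (t =P z) => [->|/eqP tz] /=; first by rewrite e.
  case: (t =P m) => [->|/eqP tm] /=; first by apply: (mid_uniq hk); [apply: midrev; apply: mx | apply: mY].
  by apply: mm; [apply: mx | apply: mY].
exists [:: (z', z)]; split; first by rewrite /wok /= ez !in_setT.
apply/ffunP => t; rewrite c1 /=.
case: (t =P z') => [->|/eqP tz']; first by rewrite psi_i.
case: (t =P z) => [->|/eqP tz]; first by rewrite psi_j //; apply: mm; [apply: mx | apply: mY; rewrite eq_sym].
by rewrite psi_o //; apply: mm; [apply: mx | apply: mY].
Qed.

Lemma nonframe (A : P -> Prop) q0 p1 : 2 < n -> external q0 ->
  (forall q, A q <-> conn_class q0 q) -> A p1 -> ~ is_frame_class A -> nm2 [set: 'I_n] p1.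
Proof.
move=> hn ext hA h1 hAf.
have [s1 [s1c s1a]] := (hA p1).1 h1.
have e1 : E [set: 'I_n] q0 p1 by apply: class_E; exists s1.
have [z [_ hz]] := inb_E hk e1 (ext_inb ext).
case: (pickP [pred t | (t != z) && ~~ mid (p1 t)]) => [t /andP [tz mt]|H].
  exists z, t; split; rewrite ?in_setT //; first by rewrite eq_sym.
  exact: inb_nmid.
have Hm : forall t, t != z -> mid (p1 t).
  by move=> t tz; have := H t; rewrite /= tz /= => /negbFE.
exfalso; apply: hAf.
have [m mz] := other z (ltnW hn).
have ok : odd k by have [] := mid_val hk (Hm m mz).
split => // q; split.
  move=> /hA /class_E eq.
  have /E_pt [s [_ _ hs]] := E_trans (E_sym e1) eq.
  apply: (frame_from hk) => //; exists (spp s z); split; first by rewrite hs inb_fl.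
  move=> t tz; rewrite -(permKV (spp s) t) hs mid_fl; apply: Hm.
  by apply: contra tz => /eqP <-; rewrite permKV.
move=> /(frame_to hk ok) [z' [hz' hm']].
have [w [w1 w2]] := frame_word (ltnW hn) hz Hm hz' hm'.
have [s' [s'c s'a]] := word_comb p1 w1.
apply/hA; exists (s' ++ s1); split.
  by rewrite /is_comb all_cat; apply/andP.
by rewrite apply_comb_cat s1a s'a.
Qed.

End Main.


Lemma ord3 n (I : {set 'I_n}) : #|I| = 3 -> exists i1 i2 i3 : 'I_n,
  [/\ i1 < i2, i2 < i3 & forall l, (l \in I) = [|| l == i1, l == i2 | l == i3]].
Proof.
move=> cI.
have so : sorted ltn (map val (enum I)).
  rewrite /enum_mem -enumT /= sorted_map.
  apply: sorted_filter; first by move=> a b c; apply: ltn_trans.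
  by rewrite -sorted_map val_enum_ord iota_ltn_sorted.
have sz : size (enum I) = 3 by rewrite -cardE.
case E: (enum I) sz so => [|i1 [|i2 [|i3 [|? ?]]]] //= _ /and3P [a b _].
exists i1, i2, i3; split => // l; rewrite -mem_enum E !inE.
by [].
Qed.

Theorem mainTheorem6 (n k : nat) (hk : 2 <= k) (hn : 3 <= n)
    (A : pos n k -> Prop) (hA : is_conn_class A) (hAf : ~ is_frame_class A)
    (p1 p2 p3 : pos n k) (h1 : A p1) (h2 : A p2) (h3 : A p3)
    (h12 : p1 != p2) (h13 : p1 != p3) (h23 : p2 != p3) :
  exists (g : seq (move n k)) (i1 i2 i3 : 'I_n) (c : {ffun 'I_n -> 'I_k}),
    [/\ is_comb g, (i1 < i2)%N, (i2 < i3)%N,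
        [/\ in_layer i1 i2 i3 c (apply_comb g p1),
            in_layer i1 i2 i3 c (apply_comb g p2) &
            in_layer i1 i2 i3 c (apply_comb g p3)] &
        exists B : pos 3 k -> Prop,
          [/\ is_conn_class B, ~ is_frame_class B,
              B (restr3 i1 i2 i3 (apply_comb g p1)),
              B (restr3 i1 i2 i3 (apply_comb g p2)) &
              B (restr3 i1 i2 i3 (apply_comb g p3))]].
Proof.
case: hA => q0 [ext hAq].
have hk' : 1 < k by [].
have [s1 [s1c s1a]] := (hAq p1).1 h1.
have [s2 [s2c s2a]] := (hAq p2).1 h2.
have [s3 [s3c s3a]] := (hAq p3).1 h3.
have e1 : E [set: 'I_n] q0 p1 by apply: class_E; exists s1.
have e2 : E [set: 'I_n] q0 p2 by apply: class_E; exists s2.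
have e3 : E [set: 'I_n] q0 p3 by apply: class_E; exists s3.
have hInv : Inv [set: 'I_n] p1 p2 p3.
  split.
  - by move=> i; rewrite in_setT.
  - exact: E_trans (E_sym e1) e2.
  - exact: E_trans (E_sym e1) e3.
  - exact: (inb_E hk' e1 (ext_inb ext)).
  - exact: (nonframe hk' hn ext hAq h1 hAf).
have cT : #|[set: 'I_n]| = (n - 3) + 3 by rewrite cardsT card_ord; lia.
have [g [I [gc cI [hout f2 f3 [z [zI hz]] [a [b [aI bI ab ma mb]]]]]]] := descend hk' cT hInv.
have [i1 [i2 [i3 [l12 l23 hI]]]] := ord3 cI.
set X1 := apply_comb g p1. set X2 := apply_comb g p2. set X3 := apply_comb g p3.
have inI_I : forall a, a \in I -> inI i1 i2 i3 a by move=> a'; rewrite hI.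
have notI : forall l, (l != i1) && (l != i2) && (l != i3) -> l \notin I.
  by move=> l; rewrite hI; case: (l == i1); case: (l == i2); case: (l == i3).
exists g, i1, i2, i3, X1; split => //.
  split; apply/forallP => l; apply/implyP => hl //.
  - by have [-> _] := hout l (notI l hl).
  - by have [_ ->] := hout l (notI l hl).
pose r1 := restr3 i1 i2 i3 X1.
have reach : forall X, E I X1 X -> conn_class r1 (restr3 i1 i2 i3 X).
  move=> X /E_word [w [w1 w2]].
  have [w3 [w3a w3b]] := restr_word l12 l23 X1 inI_I w1.
  have [s [sc sa]] := word_comb r1 w3a.
  by exists s; split => //; rewrite sa -w3b w2.
exists (conn_class r1); split.
- exists r1; split => // ; apply/existsP; exists (ei i1 i2 z).
  by rewrite restrE e3ei //; apply: inI_I.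
- case=> ok hB.
  have /(frame_to hk' ok) [z' [_ hz']] : frame_pos r1 by apply/hB; exists [::].
  have ea : ei i1 i2 a = z'.
    apply/eqP; apply: contraT => ne; have := hz' _ ne; rewrite restrE e3ei //; last exact: inI_I.
    by rewrite (negbTE ma).
  have eb : ei i1 i2 b = z'.
    apply/eqP; apply: contraT => ne; have := hz' _ ne; rewrite restrE e3ei //; last exact: inI_I.
    by rewrite (negbTE mb).
  move/eqP: ab; apply; rewrite -(e3ei (inI_I _ aI)) -(e3ei (inI_I _ bI)).
  by rewrite ea eb.
- by exists [::].
- exact: reach.
- exact: reach.
Qed.
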